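(* Let $k\subset K$ be a finite totally ramified extension of complete discrete valuation fields of degree $n$. On $\mathbb Z^2$ define $(a,b)\le(a',b')$ iff $a\le a'$ and $b\le b'$, and $(a,b)\sim(a',b')$ iff $a-a'=b'-b=nc$ for some $c\in\mathbb Z$. Then: 1. $\le$ is a partial order and $\sim$ is an equivalence relation on $\mathbb Z^2$. 2. On $\mathcal X=\mathbb Z^2/\sim$ (with $[(a,b)]$ the class of $(a,b)$), setting $[(a,b)]\le^{\mathcal X}[(a',b')]$ iff $(a,b)\le(a'',b'')$ for some $(a'',b'')\sim(a',b')$ gives a well-defined partial order. 3. For all $a,b,a',b'\in\mathbb Z$: $\mathfrak m^a\otimes\mathfrak m^b\supseteq\mathfrak m^{a'}\otimes\mathfrak m^{b'}$ if and only if $[(a,b)]\le^{\mathcal X}[(a',b')]$.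
   Context: $\mathfrak m$ is the maximal ideal of the ring of integers $O_K$ of $K$, $O_k$ the ring of integers of $k$. For $O_k$-submodules $A,B\subset K$, $A\otimes B$ denotes the $O_k$-submodule of $K\otimes_kK$ generated by all $x\otimes y$ with $x\in A$, $y\in B$. *)

(* Defs.v *)
From HB Require Import structures.
From mathcomp Require Import all_boot all_order all_algebra all_field.
Set Implicit Arguments. Unset Strict Implicit. Unset Printing Implicit Defensive.
Import Order.TTheory GRing.Theory Num.Theory.
Local Open Scope ring_scope.

(* A normalized discrete valuation on a field K, given by its values on
   nonzero elements (the value at 0 is irrelevant; 0 is treated as having
   valuation +oo through [mem_pow]). *)
Definition is_normalized_discrete_valuation (K : fieldType) (v : K -> int) : Prop :=
  [/\ (forall x y : K, x != 0 -> y != 0 -> v (x * y) = v x + v y),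
      (forall x y : K, x != 0 -> y != 0 -> x + y != 0 ->
          Num.min (v x) (v y) <= v (x + y))
    & (forall z : int, exists x : K, x != 0 /\ v x = z)].

Definition mem_pow (K : fieldType) (v : K -> int) (a : int) (x : K) : bool :=
  (x == 0) || (a <= v x).

Definition vcauchy (K : fieldType) (v : K -> int) (u : nat -> K) : Prop :=
  forall N : int, exists M : nat, forall m p : nat, (M <= m)%N -> (M <= p)%N ->
    mem_pow v N (u m - u p).

Definition vconverges (K : fieldType) (v : K -> int) (u : nat -> K) (l : K) : Prop :=
  forall N : int, exists M : nat, forall m : nat, (M <= m)%N -> mem_pow v N (u m - l).

Definition vcomplete (K : fieldType) (v : K -> int) : Prop :=
  forall u : nat -> K, vcauchy v u -> exists l : K, vconverges v u l.

Definition vcomplete_base (k : fieldType) (K : fieldExtType k) (v : K -> int) : Prop :=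
  forall u : nat -> k, vcauchy v (fun m => (u m)%:A) ->
    exists l : k, vconverges v (fun m => (u m)%:A) l%:A.

(* K/k is totally ramified of degree n: [K:k] = n and the ramification
   index is n, i.e. v_K(k^x) = nZ. *)
Definition totally_ramified (k : fieldType) (K : fieldExtType k) (v : K -> int)
    (n : nat) : Prop :=
  [/\ \dim (fullv : {vspace K}) = n,
      (forall c : k, c != 0 -> exists z : int, v c%:A = n%:Z * z)
    & (exists c : k, c != 0 /\ v c%:A = n%:Z)].

Definition in_Ok (k : fieldType) (K : fieldExtType k) (v : K -> int) (c : k) : bool :=
  mem_pow v 0 c%:A.

(* Realised concretely as d x d matrices over k via a k-basis of K
   (d = [K:k]); x (x) y has coordinates coord_i(x) * coord_j(y). *)
Definition tens (k : fieldType) (K : fieldExtType k) (x y : K)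
    : 'M[k]_(\dim (fullv : {vspace K})) :=
  \matrix_(i, j) (coord (vbasis fullv) i x * coord (vbasis fullv) j y).

(* A (x) B : the O_k-submodule generated by x (x) y, x in A, y in B,
   i.e. finite O_k-linear combinations of such pure tensors. *)
Definition tens_span (k : fieldType) (K : fieldExtType k) (v : K -> int)
    (A B : K -> bool) (M : 'M[k]_(\dim (fullv : {vspace K}))) : Prop :=
  exists s : seq (k * K * K),
    [/\ all (fun t => in_Ok v t.1.1 && A t.1.2 && B t.2) s
      & M = \sum_(t <- s) t.1.1 *: tens t.1.2 t.2].

Definition tens_pow (k : fieldType) (K : fieldExtType k) (v : K -> int) (a b : int) :=
  tens_span v (mem_pow v a) (mem_pow v b).

Definition le2 (p q : int * int) : Prop := p.1 <= q.1 /\ p.2 <= q.2.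

Definition sim (n : nat) (p q : int * int) : Prop :=
  exists c : int, p.1 - q.1 = n%:Z * c /\ q.2 - p.2 = n%:Z * c.

Definition leX (n : nat) (p q : int * int) : Prop :=
  exists q'' : int * int, sim n q'' q /\ le2 p q''.

(* Main.v *)
Require Import Defs.
From HB Require Import structures.
From mathcomp Require Import all_boot all_order all_algebra all_field.
From mathcomp Require Import zify.
Import Order.TTheory GRing.Theory Num.Theory.
Local Open Scope ring_scope.

Lemma arith1 (n j : nat) (r w a : int) : 0 <= r -> r < n%:Z -> (j < n)%N ->
  - a + (a + r) = n%:Z * w + j -> w = 0.
Proof.
move=> r0 rn hj h.
have : (w = 0 \/ 1 <= w \/ w <= -1)%R by lia.
case=> [//|[hw1|hw1]].
  have : (n%:Z <= n%:Z * w)%R by nia.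
  lia.
have : (n%:Z * w <= - n%:Z)%R by nia.
lia.
Qed.

Lemma arith2 (j : nat) (b c e : int) : - b + c = e + j -> c < b -> e < 0.
Proof. lia. Qed.

Section S.
Variables (k : fieldType) (K : fieldExtType k) (v : K -> int) (N : nat).
Local Notation n := N.+1.
Hypothesis vM : forall x y : K, x != 0 -> y != 0 -> v (x * y) = v x + v y.
Hypothesis vD : forall x y : K, x != 0 -> y != 0 -> x + y != 0 ->
          Num.min (v x) (v y) <= v (x + y).
Hypothesis vS : forall z : int, exists x : K, x != 0 /\ v x = z.
Hypothesis hdim : \dim (fullv : {vspace K}) = n.
Hypothesis hk : forall c : k, c != 0 -> exists z : int, v c%:A = n%:Z * z.
Hypothesis hpi : exists c : k, c != 0 /\ v c%:A = n%:Z.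

Lemma v1 : v 1 = 0.
Proof. have := @vM 1 1 (oner_neq0 K) (oner_neq0 K); rewrite mulr1; lia. Qed.

Lemma vN1 : v (-1) = 0.
Proof.
have h : (-1 : K) != 0 by rewrite oppr_eq0 oner_neq0.
have := @vM _ _ h h; rewrite mulrNN mulr1 v1; lia.
Qed.

Lemma vN x : x != 0 -> v (- x) = v x.
Proof.
move=> hx; have h : (-1 : K) != 0 by rewrite oppr_eq0 oner_neq0.
by rewrite -mulN1r vM // vN1 add0r.
Qed.

Lemma vV x : x != 0 -> v (x^-1) = - v x.
Proof.
move=> hx; have hi : x^-1 != 0 by rewrite invr_eq0.
have := @vM _ _ hx hi; rewrite mulfV // v1; lia.
Qed.

Lemma vlt x y : x != 0 -> y != 0 -> v x < v y -> x + y != 0 /\ v (x + y) = v x.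
Proof.
move=> hx hy hlt.
have hxy : x + y != 0.
  apply/negP => /eqP h; have hx' : x = - y by apply/eqP; rewrite -addr_eq0 h.
  by move: hlt; rewrite hx' vN // ltxx.
split=> //.
have h1 := @vD _ _ hx hy hxy; rewrite ge_min in h1.
have hny : - y != 0 by rewrite oppr_eq0.
have h2 : (x + y) + - y = x by rewrite addrK.
have := @vD _ _ hxy hny; rewrite h2 => /(_ hx); rewrite ge_min vN //.
move: h1 => /orP[h1|h1] /orP[h3|h3].
- by apply/eqP; rewrite eq_le h3 h1.
- by rewrite ltNge h3 in hlt.
- by rewrite ltNge (le_trans h1 h3) in hlt.
- by rewrite ltNge h3 in hlt.
Qed.

Lemma algA0 (c : k) : (c%:A == 0 :> K) = (c == 0).
Proof. by rewrite scaler_eq0 oner_eq0 orbF. Qed.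

Lemma algM (c d : k) : (c * d)%:A = c%:A * d%:A :> K.
Proof. by rewrite mulr_algl scalerA. Qed.

Lemma valgV (c : k) : c != 0 -> v (c^-1)%:A = - v c%:A.
Proof.
move=> hc.
have h1 : (c^-1)%:A != 0 :> K by rewrite algA0 invr_eq0.
have h2 : c%:A != 0 :> K by rewrite algA0.
have := @vM _ _ h1 h2; rewrite -algM mulVf // scale1r v1; lia.
Qed.

Lemma wexists (c : int) : exists w : k, w != 0 /\ v w%:A = n%:Z * c.
Proof.
case: hpi => p [hp hvp].
have hP : forall m : nat, v (p ^+ m)%:A = n%:Z * m.
  elim=> [|m IH]; first by rewrite expr0 scale1r v1; lia.
  rewrite exprS algM vM ?algA0 ?expf_neq0 // hvp IH; lia.
case: c => m.
  by exists (p ^+ m); split; [rewrite expf_neq0 | rewrite hP].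
exists (p ^+ m.+1)^-1; split; first by rewrite invr_eq0 expf_neq0.
rewrite valgV ?expf_neq0 // hP NegzE; lia.
Qed.

Section P.
Variable pi : K.
Hypothesis pi0 : pi != 0.
Hypothesis vpi : v pi = 1.

Lemma vpiX (m : nat) : v (pi ^+ m) = m.
Proof.
elim: m => [|m IH]; first by rewrite expr0 v1.
rewrite exprS vM ?expf_neq0 // vpi IH; lia.
Qed.

Lemma vterm (u : k) (i : nat) : u != 0 -> u *: pi ^+ i != 0 /\ v (u *: pi ^+ i) = v u%:A + i.
Proof.
move=> hu; rewrite -[u *: _]mulr_algl; split; first by rewrite mulf_neq0 ?algA0 ?expf_neq0.
by rewrite vM ?algA0 ?expf_neq0 // vpiX.
Qed.

Lemma strong (u : nat -> k) (m : nat) : (m <= n)%N ->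
  (forall i, (i < m)%N -> u i = 0) \/
  (\sum_(i < m) u i *: pi ^+ i != 0 /\
   (exists i, [/\ (i < m)%N, u i != 0 & v (\sum_(i < m) u i *: pi ^+ i) = v (u i)%:A + i]) /\
   (forall i, (i < m)%N -> u i != 0 -> v (\sum_(i < m) u i *: pi ^+ i) <= v (u i)%:A + i)).
Proof.
elim: m => [|m IH] hm; first by left.
have hm' : (m <= n)%N by lia.
rewrite big_ord_recr /=.
have hsplit : forall i, (i < m.+1)%N -> (i < m)%N \/ i = m by move=> i; lia.
set S := \sum_(i < m) _.
have hSe : S = \sum_(i < m) u i *: pi ^+ i by [].
case: (eqVneq (u m) 0) => hum.
  rewrite hum scale0r addr0.
  case: (IH hm') => [h|[h1 [[i [h2 h3 h4]] h5]]].
    by left=> i /hsplit [/h|->].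
  right; split=> //; split; first by exists i; split=> //; lia.
  by move=> j /hsplit [/h5|->] //; rewrite hum eqxx.
have [ht vt] := @vterm (u m) m hum.
case: (IH hm') => [h|[h1 [[i [h2 h3 h4]] h5]]].
  have -> : S = 0 by rewrite hSe big1 // => i _; rewrite h // scale0r.
  rewrite add0r; right; split=> //; split; first by exists m.
  by move=> j /hsplit [/h ->|->]; [rewrite eqxx|rewrite vt].
have [z1 hz1] := @hk _ h3.
have [z2 hz2] := @hk _ hum.
have hne : v S != v (u m *: pi ^+ m).
  rewrite hSe h4 vt hz1 hz2; apply/negP => /eqP hq.
  have : (z1 = z2 \/ z2 + 1 <= z1 \/ z1 <= z2 - 1)%R by lia.
  case=> [hz|[hz|hz]]; nia.
right; case: (ltgtP (v S) (v (u m *: pi ^+ m))) => hc.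
- have [hs vs] := @vlt _ _ h1 ht hc.
  split=> //; split; first by exists i; split=> //; [lia | rewrite vs].
  move=> j /hsplit [hj|->] hj0; first by rewrite vs h5.
  by rewrite vs -vt le_eqVlt hc orbT.
- have [hs vs] := @vlt _ _ ht h1 hc; rewrite addrC in hs vs.
  split=> //; split; first by exists m; split=> //; rewrite vs vt.
  move=> j /hsplit [hj|->] hj0; last by rewrite vs vt.
  by rewrite vs (le_trans (ltW hc)) // h5.
- by rewrite hc eqxx in hne.
Qed.


Definition X : n.-tuple K := [tuple pi ^+ i | i < n].

Lemma sumX (u : 'I_n -> k) :
  \sum_(i < n) u i *: X`_i = \sum_(i < n) u (inord i) *: pi ^+ i.
Proof. by apply: eq_bigr => i _; rewrite inord_val nth_mktuple. Qed.

Lemma freeX : free X.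
Proof.
apply/freeP => u hu i.
case: (@strong (fun j => u (inord j)) n (leqnn n)) => [h|[h _]].
  by rewrite -(inord_val i) h.
by rewrite -(sumX u) hu eqxx in h.
Qed.

Lemma spanX : <<X>>%VS = fullv.
Proof.
apply: span_basis; rewrite basisEfree freeX subvf hdim size_tuple leqnn.
by [].
Qed.

Lemma decomp (z : K) : z = \sum_i coord X i z *: X`_i.
Proof. by apply: coord_span; rewrite spanX memvf. Qed.

Lemma strongX (z : K) : z != 0 ->
  (exists i : 'I_n, coord X i z != 0 /\ v z = v (coord X i z)%:A + i) /\
  (forall i : 'I_n, coord X i z != 0 -> v z <= v (coord X i z)%:A + i).
Proof.
move=> hz.
case: (@strong (fun j => coord X (inord j) z) n (leqnn n)) => [h|[_ [[i [h2 h3 h4]] h5]]].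
  case/negP: hz; rewrite [z]decomp (sumX (fun i => coord X i z)) big1 // => i _.
  by rewrite h // scale0r.
rewrite -(sumX (fun i => coord X i z)) -decomp in h4 h5.
split; first by exists (inord i); rewrite inordK.
by move=> i0 hi; have := h5 i0 (ltn_ord i0); rewrite inord_val; apply.
Qed.

Lemma inOk0 : in_Ok v 0.
Proof. by rewrite /in_Ok /mem_pow scale0r eqxx. Qed.

Lemma gen_ok (a : int) (rho x : K) (i : 'I_n) : rho != 0 -> v rho = - a ->
  mem_pow v a x -> in_Ok v (coord X i (rho * x)).
Proof.
move=> hr vr.
case: (eqVneq x 0) => [->|x0]; first by rewrite mulr0 linear0 inOk0.
rewrite /mem_pow (negbTE x0) /= => hx.
have hz : rho * x != 0 by rewrite mulf_neq0.
have [_ h] := @strongX _ hz.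
case: (eqVneq (coord X i (rho * x)) 0) => [->|hc]; first exact: inOk0.
have := h i hc; rewrite vM // vr.
have [w hw] := @hk _ hc.
rewrite /in_Ok /mem_pow hw => hle; apply/orP; right.
have := ltn_ord i; move: hle hx; set j := nat_of_ord i => hle hx hj.
have hw0 : (0 <= w)%R.
  case: (lerP 0 w) => // hw1.
  have : (n%:Z * w <= - n%:Z)%R by nia.
  lia.
nia.
Qed.


Definition Phi (i0 j0 : 'I_n) (ra rb : K) (M : 'M[k]_(\dim (fullv : {vspace K}))) : k :=
  \sum_i \sum_j M i j * (coord X i0 (ra * (vbasis fullv)`_i) * coord X j0 (rb * (vbasis fullv)`_j)).

Lemma flin (r : K) (i0 : 'I_n) (x : K) : coord X i0 (r * x) =
  \sum_i coord (vbasis fullv) i x * coord X i0 (r * (vbasis fullv)`_i).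
Proof.
rewrite {1}(coord_vbasis (memvf x)) mulr_sumr linear_sum; apply: eq_bigr => i _.
by rewrite -scalerAr linearZ.
Qed.

Lemma Phi_tens i0 j0 ra rb x y :
  Phi i0 j0 ra rb (tens x y) = coord X i0 (ra * x) * coord X j0 (rb * y).
Proof.
rewrite /Phi (flin ra i0 x) (flin rb j0 y) mulr_suml; apply: eq_bigr => i _.
rewrite mulr_sumr; apply: eq_bigr => j _.
by rewrite mxE mulrACA.
Qed.

Lemma Phi_sum i0 j0 ra rb (s : seq (k * K * K)) :
  Phi i0 j0 ra rb (\sum_(t <- s) t.1.1 *: tens t.1.2 t.2) =
  \sum_(t <- s) t.1.1 * Phi i0 j0 ra rb (tens t.1.2 t.2).
Proof.
elim: s => [|t s IH].
  rewrite !big_nil /Phi big1 // => i _; rewrite big1 // => j _.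
  by rewrite mxE mul0r.
rewrite !big_cons -IH /Phi mulr_sumr -big_split; apply: eq_bigr => i _.
rewrite mulr_sumr -big_split; apply: eq_bigr => j _.
by rewrite !mxE mulrDl mulrA.
Qed.

End P.

Lemma OKD (x y : K) : mem_pow v 0 x -> mem_pow v 0 y -> mem_pow v 0 (x + y).
Proof.
rewrite /mem_pow => hx hy.
case: (eqVneq x 0) hx => [-> _|x0 /= hx]; first by rewrite add0r.
case: (eqVneq y 0) hy => [-> _|y0 /= hy]; first by rewrite addr0 (negbTE x0).
case: (eqVneq (x + y) 0) => [//|xy0] /=.
have := @vD _ _ x0 y0 xy0; rewrite ge_min => /orP[] h; exact: le_trans h.
Qed.

Lemma inOkD c d : in_Ok v c -> in_Ok v d -> in_Ok v (c + d).
Proof. by rewrite /in_Ok scalerDl; apply: OKD. Qed.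

Lemma inOkM c d : in_Ok v c -> in_Ok v d -> in_Ok v (c * d).
Proof.
rewrite /in_Ok /mem_pow !algA0 mulf_eq0.
case: (eqVneq c 0) => //= c0; case: (eqVneq d 0) => //= d0 hc hd.
by rewrite algM vM ?algA0 // addr_ge0.
Qed.

Lemma mem_scale (a a' e : int) (x y : K) : y != 0 -> v y = e -> a <= a' + e ->
  mem_pow v a' x -> mem_pow v a (x * y).
Proof.
move=> y0 vy hle; rewrite /mem_pow.
case: (eqVneq x 0) => [->|x0] /=; first by rewrite mul0r eqxx.
by rewrite mulf_eq0 (negbTE x0) (negbTE y0) vM // vy => h; apply: le_trans hle _; rewrite lerD2r.
Qed.

Lemma back a b a' b' c M : a <= a' + n%:Z * c -> b <= b' - n%:Z * c ->
  tens_pow v a' b' M -> tens_pow v a b M.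
Proof.
move=> ha hb.
have [w [w0 vw]] := wexists c.
have wA0 : w%:A != 0 :> K by rewrite algA0.
have wiA0 : w^-1%:A != 0 :> K by rewrite algA0 invr_eq0.
case=> s [hall ->].
exists [seq (t.1.1, t.1.2 * w%:A, t.2 * w^-1%:A) | t <- s]; split.
  rewrite all_map; apply/allP => t ht /=.
  have /andP[/andP[h1 h2] h3] := allP hall t ht.
  rewrite h1 /=; apply/andP; split.
    exact: (@mem_scale _ _ _ _ _ wA0 vw ha h2).
  by apply: (@mem_scale _ _ _ _ _ wiA0 (@valgV _ w0)) h3; rewrite vw.
rewrite big_map; apply: eq_bigr => t _ /=; congr (_ *: _); apply/matrixP => i j.
by rewrite !mxE !mulr_algr !linearZ /= mulrACA mulfV // mul1r.
Qed.

Lemma fwd a b a' b' : (forall M, tens_pow v a' b' M -> tens_pow v a b M) ->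
  leX n (a, b) (a', b').
Proof.
move=> H.
have [pi [pi0 vpi]] := vS 1.
set d := a' - a.
set q := (d %/ n)%Z.
set r := (d %% n)%Z.
have hd : d = q * n + r := divz_eq d n.
have r0 : 0 <= r by apply: modz_ge0.
have rn : r < n by apply: ltz_pmod.
exists (a' - n%:Z * q, b' + n%:Z * q); split.
  by exists (- q); rewrite /=; split; lia.
rewrite /le2 /=; split; first lia.
case: (lerP b (b' + n%:Z * q)) => // hlt; exfalso.
have [x1 [x10 vx1]] := vS (a + r).
have [y1 [y10 vy1]] := vS (b' + n%:Z * q).
have hT : tens_pow v a b (tens x1 y1).
  apply: H; apply: (@back a' b' (a + r) (b' + n%:Z * q) q); [lia|lia|].
  exists [:: (1, x1, y1)]; split.
    rewrite /= /in_Ok /mem_pow scale1r v1 lexx orbT /=.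
    by rewrite vx1 vy1 !lexx !orbT.
  by rewrite big_cons big_nil addr0 scale1r.
case: hT => s [hall hM].
have [ra [ra0 vra]] := vS (- a).
have [rb [rb0 vrb]] := vS (- b).
have z10 : ra * x1 != 0 by rewrite mulf_neq0.
have z20 : rb * y1 != 0 by rewrite mulf_neq0.
have [[i0 [hu0 vu0]] _] := @strongX pi pi0 vpi _ z10.
have [[j0 [hu1 vu1]] _] := @strongX pi pi0 vpi _ z20.
rewrite vM // vra vx1 in vu0.
rewrite vM // vrb vy1 in vu1.
have [w hw] := @hk _ hu0.
have hi0 := ltn_ord i0.
have hw0 : v (coord (X pi) i0 (ra * x1))%:A = 0.
  rewrite hw in vu0 *; rewrite (@arith1 _ _ _ _ _ r0 rn hi0 vu0); lia.
have hneg : v (coord (X pi) j0 (rb * y1))%:A < 0 by exact: (@arith2 _ _ _ _ vu1 hlt).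
have hP := Phi_tens pi i0 j0 ra rb x1 y1.
rewrite hM Phi_sum in hP.
have hok : in_Ok v (Phi pi i0 j0 ra rb (\sum_(t <- s) t.1.1 *: tens t.1.2 t.2)).
  rewrite Phi_sum.
  elim: s hall {hM hP} => [|t s IH]; first by rewrite big_nil inOk0.
  rewrite /= big_cons => /andP[/andP[/andP[h1 h2] h3] hs].
  apply: inOkD; last exact: IH.
  apply: inOkM => //; rewrite Phi_tens; apply: inOkM.
    exact: (@gen_ok pi pi0 vpi a).
  exact: (@gen_ok pi pi0 vpi b).
rewrite Phi_sum hP /in_Ok /mem_pow algA0 mulf_eq0 (negbTE hu0) (negbTE hu1) /= in hok.
rewrite algM vM ?algA0 // hw0 add0r in hok.
by rewrite ltNge hok in hneg.
Qed.

End S.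

Lemma le2_refl p : le2 p p.
Proof. by split. Qed.
Lemma le2_anti p q : le2 p q -> le2 q p -> p = q.
Proof. case: p q => [p1 p2] [q1 q2] [/= h1 h2] [/= h3 h4]; congr pair; lia. Qed.
Lemma le2_trans p q r : le2 p q -> le2 q r -> le2 p r.
Proof. case: p q r => [p1 p2] [q1 q2] [r1 r2] [/= h1 h2] [/= h3 h4]; split=> /=; lia. Qed.

Lemma sim_refl n p : sim n p p.
Proof. by exists 0; rewrite !subrr mulr0. Qed.
Lemma sim_sym n p q : sim n p q -> sim n q p.
Proof. case: p q => [p1 p2] [q1 q2] [c [/= h1 h2]]; exists (- c) => /=; split; nia. Qed.
Lemma sim_trans n p q r : sim n p q -> sim n q r -> sim n p r.
Proof.
case: p q r => [p1 p2] [q1 q2] [r1 r2] [c [/= h1 h2]] [d [/= h3 h4]].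
exists (c + d) => /=; split; nia.
Qed.

Lemma leX_wd1 n p p' q q' : sim n p p' -> sim n q q' -> leX n p q -> leX n p' q'.
Proof.
case: p p' q q' => [p1 p2] [p1' p2'] [q1 q2] [q1' q2'] [c1 [/= h1 h2]] [c2 [/= h3 h4]].
case=> [[x1 x2] [[c [/= h5 h6]] [/= h7 h8]]].
exists (q1' + n%:Z * (c2 + c - c1), q2' - n%:Z * (c2 + c - c1)); split.
  by exists (c2 + c - c1) => /=; split; nia.
by split => /=; nia.
Qed.

Lemma leX_refl n p : leX n p p.
Proof. by exists p; split; [exact: sim_refl | exact: le2_refl]. Qed.

Lemma leX_anti n p q : (0 < n)%N -> leX n p q -> leX n q p -> sim n p q.
Proof.
move=> n0.
case: p q => [p1 p2] [q1 q2] [[x1 x2] [[c [/= h1 h2]] [/= h3 h4]]] [[y1 y2] [[d [/= h5 h6]] [/= h7 h8]]].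
have hcd : c + d = 0.
  have : (n%:Z * (c + d) = 0)%R by nia.
  move/eqP; rewrite mulf_eq0 => /orP[/eqP hn|/eqP //]; lia.
exists c => /=; split; nia.
Qed.

Lemma leX_trans n p q r : leX n p q -> leX n q r -> leX n p r.
Proof.
case: p q r => [p1 p2] [q1 q2] [r1 r2] [[x1 x2] [[c [/= h1 h2]] [/= h3 h4]]] [[y1 y2] [[d [/= h5 h6]] [/= h7 h8]]].
exists (r1 + n%:Z * (c + d), r2 - n%:Z * (c + d)); split.
  by exists (c + d) => /=; split; nia.
by split => /=; nia.
Qed.

Theorem lemma4p2p3 (k : fieldType) (K : fieldExtType k) (v : K -> int) (n : nat) :
  is_normalized_discrete_valuation v ->
  vcomplete v -> vcomplete_base v ->
  totally_ramified v n ->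
  (* 1. <= is a partial order, ~ an equivalence relation on Z^2 *)
  ((forall p, le2 p p) /\
   (forall p q, le2 p q -> le2 q p -> p = q) /\
   (forall p q r, le2 p q -> le2 q r -> le2 p r)) /\
  ((forall p, sim n p p) /\
   (forall p q, sim n p q -> sim n q p) /\
   (forall p q r, sim n p q -> sim n q r -> sim n p r)) /\
  (* 2. <=^X is well defined on classes and is a partial order on Z^2/~ *)
  ((forall p p' q q', sim n p p' -> sim n q q' -> (leX n p q <-> leX n p' q')) /\
   (forall p, leX n p p) /\
   (forall p q, leX n p q -> leX n q p -> sim n p q) /\
   (forall p q r, leX n p q -> leX n q r -> leX n p r)) /\
  (* 3. m^a (x) m^b contains m^a' (x) m^b' iff [(a,b)] <=^X [(a',b')] *)
  (forall a b a' b' : int,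
     (forall M, tens_pow v a' b' M -> tens_pow v a b M) <-> leX n (a, b) (a', b')).
Proof.
move=> [vM vD vS] _ _ [hdim hk hpi].
have n0 : (0 < n)%N.
  have h0 : (0 < \dim (fullv : {vspace K}))%N by exact: adim_gt0.
  by rewrite hdim in h0.
split; first by split; [exact: le2_refl | split; [exact: le2_anti | exact: le2_trans]].
split; first by split; [exact: sim_refl | split; [exact: sim_sym | exact: sim_trans]].
split.
  split.
    move=> p p' q q' hp hq; split; first exact: leX_wd1.
    by apply: leX_wd1; apply: sim_sym.
  split; first exact: leX_refl.
  by split; [move=> p q; exact: leX_anti | exact: leX_trans].
case: n n0 hdim hk hpi => [//|N] _ hdim hk hpi a b a' b'; split.
  by apply: fwd.
case=> [[x1 x2] [[c [/= h1 h2]] [/= h3 h4]]] M.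
apply: (@back k K v N vM hdim hpi a b a' b' c); lia.
Qed.
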